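(* In continuous time, suppose $\pi_0(1|B)\le\pi_0(1|A)$, and one of the following is applied at all times: the unconstrained policy UN, the AA1 policy, or the AA2 policy. Then $\pi_t(1|B)\le\pi_t(1|A)$ for all $t\ge0$ (the initial advantage is preserved).
   Context: Two groups $A,B$; $\neg j$ is the other group. Group $j$ has qualification profile $\pi_t(1|j)\in[0,1]$, $\pi_t(0|j)=1-\pi_t(1|j)$. Selection rates of a policy $\tau$: $\beta_t(v;j)=\tau(v;j)\pi_t(v|j)$. Dynamics: continuously differentiable $f_0,f_1:[0,1]^2\to[0,1]$; continuous time: $\frac{d}{dt}\pi_t(1|j)=\pi_t(1|j)\big(f_1(\beta_t(0;j),\beta_t(1;j))-1\big)+(1-\pi_t(1|j))f_0(\beta_t(0;j),\beta_t(1;j))$, with the policy at time $t$ determined by the current profiles. UN: $\tau(1;j)=1,\tau(0;j)=0$, selection rates $(0,\pi_t(1|j))$. Group $j$ is advantaged at $t$ if $\pi_t(1|j)\ge\pi_t(1|\neg j)$. AA1 w.r.t. advantaged $j$: selection rates $\beta_t(0;j)=\beta_t(0;\neg j)=0$, $\beta_t(1;j)=\beta_t(1;\neg j)=\pi_t(1|\neg j)$ (i.e. $\tau(1;j)=\pi_t(1|\neg j)/\pi_t(1|j)$, $\tau(1;\neg j)=1$, $\tau(0;\cdot)=0$). AA2 w.r.t. advantaged $j$: $\beta_t(0;j)=0$, $\beta_t(1;j)=\pi_t(1|j)$, $\beta_t(0;\neg j)=\pi_t(1|j)-\pi_t(1|\neg j)$, $\beta_t(1;\neg j)=\pi_t(1|\neg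 j)$ (i.e. $\tau(1;\cdot)=1$, $\tau(0;j)=0$, $\tau(0;\neg j)=(\pi_t(1|j)-\pi_t(1|\neg j))/(1-\pi_t(1|\neg j))$). ''Applied at all times'' means at each $t$ the policy is taken with respect to the group advantaged at time $t$. *)

(* Defs.v *)
From Stdlib Require Import Reals Lra.
Open Scope R_scope.

Definition in_sq (x y : R) : Prop := 0 <= x <= 1 /\ 0 <= y <= 1.

Definition maps_sq_to_unit (f : R -> R -> R) : Prop :=
  forall x y, in_sq x y -> 0 <= f x y <= 1.

Definition cont_on_sq (g : R -> R -> R) : Prop :=
  forall x y, in_sq x y -> forall eps, eps > 0 -> exists delta, delta > 0 /\
    forall x' y', in_sq x' y' -> Rabs (x' - x) < delta -> Rabs (y' - y) < delta ->
      Rabs (g x' y' - g x y) < eps.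

Definition C1_on_sq (f : R -> R -> R) : Prop :=
  exists D1 D2 : R -> R -> R,
    (forall x y, in_sq x y -> forall eps, eps > 0 -> exists delta, delta > 0 /\
       forall x' y', in_sq x' y' -> Rabs (x' - x) < delta -> Rabs (y' - y) < delta ->
         Rabs (f x' y' - f x y - D1 x y * (x' - x) - D2 x y * (y' - y))
           <= eps * Rmax (Rabs (x' - x)) (Rabs (y' - y)))
    /\ cont_on_sq D1 /\ cont_on_sq D2.

Inductive policy : Type := UN | AA1 | AA2.

(* Selection rates (beta(0), beta(1)) of the advantaged group, given its own
   qualification profile [own] and that of the other group [other]. *)
Definition adv_rates (pol : policy) (own other : R) : R * R :=
  match pol with
  | UN => (0, own)
  | AA1 => (0, other)
  | AA2 => (0, own)
  end.

Definition disadv_rates (pol : policy) (own other : R) : R * R :=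
  match pol with
  | UN => (0, own)
  | AA1 => (0, own)
  | AA2 => (other - own, own)
  end.

(* Rates of group A and group B when the profiles are (pA, pB); the policy is
   taken w.r.t. the group advantaged at that moment (A if pA >= pB; at a tie
   both choices give the same rates). *)
Definition rates_A (pol : policy) (pA pB : R) : R * R :=
  if Rle_dec pB pA then adv_rates pol pA pB else disadv_rates pol pA pB.

Definition rates_B (pol : policy) (pA pB : R) : R * R :=
  if Rle_dec pB pA then disadv_rates pol pB pA else adv_rates pol pB pA.

Definition dyn (f0 f1 : R -> R -> R) (p : R) (b : R * R) : R :=
  p * (f1 (fst b) (snd b) - 1) + (1 - p) * f0 (fst b) (snd b).

Definition right_cont_0 (p : R -> R) : Prop :=
  forall eps, eps > 0 -> exists delta, delta > 0 /\
    forall t, 0 <= t < delta -> Rabs (p t - p 0) < eps.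

(* Main.v *)
Require Import Defs.
From Stdlib Require Import Reals Lra.
Open Scope R_scope.

Lemma le_eps (x y : R) : (forall eps, eps > 0 -> x <= y + eps) -> x <= y.
Proof.
  intros H. destruct (Rle_dec x y) as [h|h]; auto.
  specialize (H ((x-y)/2)). lra.
Qed.

Lemma lip1 (phi c : R -> R) (a b K : R) : a <= b ->
  (forall u, a <= u <= b -> Rabs (c u) <= K) ->
  (forall u, a <= u <= b -> forall eps, eps > 0 -> exists delta, delta > 0 /\
     forall v, a <= v <= b -> Rabs (v - u) < delta ->
       Rabs (phi v - phi u - c u * (v - u)) <= eps * Rabs (v - u)) ->
  Rabs (phi b - phi a) <= K * (b - a).
Proof.
  intros Hab Hc Hd.
  assert (HK : 0 <= K) by (specialize (Hc a ltac:(lra)); pose proof (Rabs_pos (c a)); lra).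
  destruct (Req_dec a b) as [e|hne].
  { subst. replace (phi b - phi b) with 0 by ring. rewrite Rabs_R0. lra. }
  assert (Hlt : a < b) by lra.
  assert (Hcont : forall u, a <= u <= b -> forall eps, eps > 0 -> exists delta, delta > 0 /\
     forall v, a <= v <= b -> Rabs (v - u) < delta -> Rabs (phi v - phi u) < eps).
  { intros u Hu eps Heps.
    destruct (Hd u Hu 1 ltac:(lra)) as [dl [Hdl Hv]].
    exists (Rmin dl (eps / (K + 1))). split.
    { apply Rmin_glb_lt; [lra|]. apply Rdiv_lt_0_compat; lra. }
    intros v Hv' Hvu.
    pose proof (Hv v Hv' (Rlt_le_trans _ _ _ Hvu (Rmin_l _ _))) as H1.
    pose proof (Rlt_le_trans _ _ _ Hvu (Rmin_r _ _)) as H2.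
    pose proof (Hc u Hu) as H3.
    assert (Rabs (c u * (v - u)) <= K * Rabs (v-u)).
    { rewrite Rabs_mult. apply Rmult_le_compat_r; [apply Rabs_pos|lra]. }
    assert (Rabs (v-u) * (K+1) < eps).
    { apply (Rmult_lt_compat_r (K+1)) in H2; [|lra].
      unfold Rdiv in H2. rewrite Rmult_assoc, Rinv_l in H2 by lra. lra. }
    pose proof (Rabs_triang (phi v - phi u - c u * (v - u)) (c u * (v - u))) as T.
    replace (phi v - phi u - c u * (v - u) + c u * (v - u)) with (phi v - phi u) in T by ring.
    lra. }
  assert (Hder : forall u, a < u < b -> derivable_pt_lim phi u (c u)).
  { intros u Hu eps Heps.
    destruct (Hd u ltac:(lra) (eps/2) ltac:(lra)) as [dl [Hdl Hv]].
    assert (Hpos : 0 < Rmin dl (Rmin (u - a) (b - u))).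
    { repeat apply Rmin_glb_lt; lra. }
    exists (mkposreal _ Hpos). intros h Hh0 Hh. simpl in Hh.
    pose proof (Rlt_le_trans _ _ _ Hh (Rmin_l _ _)) as H1.
    pose proof (Rlt_le_trans _ _ _ Hh (Rmin_r _ _)) as H2.
    pose proof (Rlt_le_trans _ _ _ H2 (Rmin_l _ _)) as H3.
    pose proof (Rlt_le_trans _ _ _ H2 (Rmin_r _ _)) as H4.
    assert (Hin : a <= u + h <= b).
    { destruct (Rabs_def2 _ _ H3); destruct (Rabs_def2 _ _ H4); lra. }
    specialize (Hv (u + h) Hin). replace (u + h - u) with h in Hv by ring.
    specialize (Hv H1).
    replace ((phi (u + h) - phi u) / h - c u) with ((phi (u + h) - phi u - c u * h) / h)
      by (field; auto).
    unfold Rdiv. rewrite Rabs_mult, Rabs_inv.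
    assert (0 < Rabs h) by (apply Rabs_pos_lt; auto).
    apply (Rmult_le_compat_r (/ Rabs h)) in Hv; [|left; apply Rinv_0_lt_compat; auto].
    rewrite Rmult_assoc, Rinv_r in Hv by lra. lra. }
  apply le_eps. intros eps Heps.
  destruct (Hcont a ltac:(lra) (eps/2) ltac:(lra)) as [da [Hda Ha]].
  destruct (Hcont b ltac:(lra) (eps/2) ltac:(lra)) as [db [Hdb Hb]].
  set (w := Rmin (Rmin da db) ((b - a)/3) / 2).
  assert (Hw : 0 < w /\ w < da /\ w < db /\ w < (b-a)/3).
  { unfold w. pose proof (Rmin_l (Rmin da db) ((b-a)/3)).
    pose proof (Rmin_r (Rmin da db) ((b-a)/3)).
    pose proof (Rmin_l da db). pose proof (Rmin_r da db).
    assert (0 < Rmin (Rmin da db) ((b - a)/3)) by (repeat apply Rmin_glb_lt; lra).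
    lra. }
  set (a' := a + w). set (b' := b - w).
  assert (Hab' : a' < b') by (unfold a', b'; lra).
  destruct (MVT_cor2 phi c a' b' Hab') as [z [Hz1 Hz2]].
  { intros x Hx. apply Hder. unfold a', b' in Hx; lra. }
  assert (A1 : Rabs (phi a' - phi a) < eps/2).
  { apply Ha; unfold a'; [lra|]. rewrite Rabs_right; lra. }
  assert (B1 : Rabs (phi b' - phi b) < eps/2).
  { apply Hb; unfold b'; [lra|]. rewrite Rabs_left; lra. }
  assert (C1 : Rabs (phi b' - phi a') <= K * (b - a)).
  { rewrite Hz1, Rabs_mult. rewrite (Rabs_right (b' - a')) by lra.
    pose proof (Hc z ltac:(unfold a', b' in Hz2; lra)).
    apply Rle_trans with (K * (b' - a')).
    - apply Rmult_le_compat_r; lra.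
    - apply Rmult_le_compat_l; unfold a', b'; lra. }
  replace (phi b - phi a) with ((phi b' - phi a') + (- (phi b' - phi b)) + (phi a' - phi a)) by ring.
  pose proof (Rabs_triang ((phi b' - phi a') + (- (phi b' - phi b))) (phi a' - phi a)).
  pose proof (Rabs_triang (phi b' - phi a') (- (phi b' - phi b))).
  rewrite Rabs_Ropp in H0. lra.
Qed.

Lemma lip1' (phi c : R -> R) (P : R -> Prop) (K : R) :
  (forall a b u, P a -> P b -> a <= u <= b -> P u) ->
  (forall u, P u -> Rabs (c u) <= K) ->
  (forall u, P u -> forall eps, eps > 0 -> exists delta, delta > 0 /\
     forall v, P v -> Rabs (v - u) < delta ->
       Rabs (phi v - phi u - c u * (v - u)) <= eps * Rabs (v - u)) ->
  forall a b, P a -> P b -> Rabs (phi b - phi a) <= K * Rabs (b - a).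
Proof.
  intros Hconv Hc Hd.
  assert (H : forall a b, P a -> P b -> a <= b -> Rabs (phi b - phi a) <= K * Rabs (b - a)).
  { intros a b Pa Pb Hab. rewrite (Rabs_right (b - a)) by lra.
    apply lip1 with c; auto.
    - intros u Hu. apply Hc. exact (Hconv a b u Pa Pb Hu).
    - intros u Hu eps Heps. destruct (Hd u (Hconv a b u Pa Pb Hu) eps Heps) as [dl [Hdl Hv]].
      exists dl; split; auto. intros v Hv' Hvu. apply Hv; auto. exact (Hconv a b v Pa Pb Hv'). }
  intros a b Pa Pb. destruct (Rle_dec a b) as [h|h]; [apply H; auto|].
  rewrite <- Rabs_Ropp, (Rabs_minus_sym b a). replace (- (phi b - phi a)) with (phi a - phi b) by ring.
  apply H; auto; lra.
Qed.

Lemma loclip (f : R -> R -> R) (x0 y0 : R) : C1_on_sq f -> in_sq x0 y0 ->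
  exists r L, r > 0 /\ 0 <= L /\ forall x y x' y', in_sq x y -> in_sq x' y' ->
    Rabs (x - x0) < r -> Rabs (x' - x0) < r -> Rabs (y - y0) < r -> Rabs (y' - y0) < r ->
    Rabs (f x' y' - f x y) <= L * (Rabs (x' - x) + Rabs (y' - y)).
Proof.
  intros [D1 [D2 [HF [HC1 HC2]]]] Hsq.
  destruct (HC1 x0 y0 Hsq 1 ltac:(lra)) as [d1 [Hd1 H1]].
  destruct (HC2 x0 y0 Hsq 1 ltac:(lra)) as [d2 [Hd2 H2]].
  set (r := Rmin d1 d2). set (K1 := Rabs (D1 x0 y0) + 1). set (K2 := Rabs (D2 x0 y0) + 1).
  assert (Hr : r > 0) by (apply Rmin_glb_lt; lra).
  assert (Hr1 : r <= d1) by apply Rmin_l. assert (Hr2 : r <= d2) by apply Rmin_r.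
  assert (HK1 : 0 <= K1) by (pose proof (Rabs_pos (D1 x0 y0)); unfold K1; lra).
  assert (HK2 : 0 <= K2) by (pose proof (Rabs_pos (D2 x0 y0)); unfold K2; lra).
  exists r, (Rmax K1 K2). split; [auto|split; [apply Rle_trans with K1; [auto|apply Rmax_l]|]].
  assert (bnd : forall z, Rabs (z - x0) < r <-> x0 - r < z < x0 + r) by
    (intros z; split; [intro h; destruct (Rabs_def2 _ _ h); lra| intro h; apply Rabs_def1; lra]).
  assert (bnd' : forall z, Rabs (z - y0) < r <-> y0 - r < z < y0 + r) by
    (intros z; split; [intro h; destruct (Rabs_def2 _ _ h); lra| intro h; apply Rabs_def1; lra]).
  intros x y x' y' Sxy Sxy' Hx Hx' Hy Hy'.
  assert (Hh : Rabs (f x' y' - f x y') <= K1 * Rabs (x' - x)).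
  { apply (lip1' (fun v => f v y') (fun v => D1 v y')
      (fun v => 0 <= v <= 1 /\ Rabs (v - x0) < r)).
    - intros a b u [Pa Pa'] [Pb Pb'] Hu. rewrite bnd in *. split; lra.
    - intros u [Pu Pu']. assert (in_sq u y') by (unfold in_sq in *; tauto).
      specialize (H1 u y' H ltac:(lra) ltac:(lra)).
      pose proof (Rabs_triang_inv (D1 u y') (D1 x0 y0)). unfold K1; lra.
    - intros u [Pu Pu'] eps Heps. assert (Su : in_sq u y') by (unfold in_sq in *; tauto).
      destruct (HF u y' Su eps Heps) as [dl [Hdl Hv]]. exists dl; split; auto.
      intros v [Pv Pv'] Hvu. assert (Sv : in_sq v y') by (unfold in_sq in *; tauto).
      specialize (Hv v y' Sv Hvu ltac:(replace (y' - y') with 0 by ring; rewrite Rabs_R0; lra)).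
      replace (y' - y') with 0 in Hv by ring. rewrite Rabs_R0, Rmult_0_r, Rminus_0_r in Hv.
      rewrite Rmax_left in Hv by apply Rabs_pos. exact Hv.
    - split; [unfold in_sq in Sxy; tauto|auto].
    - split; [unfold in_sq in Sxy'; tauto|auto]. }
  assert (Hv : Rabs (f x y' - f x y) <= K2 * Rabs (y' - y)).
  { apply (lip1' (fun v => f x v) (fun v => D2 x v)
      (fun v => 0 <= v <= 1 /\ Rabs (v - y0) < r)).
    - intros a b u [Pa Pa'] [Pb Pb'] Hu. rewrite bnd' in *. split; lra.
    - intros u [Pu Pu']. assert (in_sq x u) by (unfold in_sq in *; tauto).
      specialize (H2 x u H ltac:(lra) ltac:(lra)).
      pose proof (Rabs_triang_inv (D2 x u) (D2 x0 y0)). unfold K2; lra.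
    - intros u [Pu Pu'] eps Heps. assert (Su : in_sq x u) by (unfold in_sq in *; tauto).
      destruct (HF x u Su eps Heps) as [dl [Hdl Hv]]. exists dl; split; auto.
      intros v [Pv Pv'] Hvu. assert (Sv : in_sq x v) by (unfold in_sq in *; tauto).
      specialize (Hv x v Sv ltac:(replace (x - x) with 0 by ring; rewrite Rabs_R0; lra) Hvu).
      replace (x - x) with 0 in Hv by ring. rewrite Rabs_R0, Rmult_0_r, Rminus_0_r in Hv.
      rewrite Rmax_right in Hv by apply Rabs_pos.
      exact Hv.
    - split; [unfold in_sq in Sxy; tauto|auto].
    - split; [unfold in_sq in Sxy'; tauto|auto]. }
  replace (f x' y' - f x y) with ((f x' y' - f x y') + (f x y' - f x y)) by ring.
  pose proof (Rabs_triang (f x' y' - f x y') (f x y' - f x y)).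
  pose proof (Rmax_l K1 K2). pose proof (Rmax_r K1 K2).
  pose proof (Rabs_pos (x'-x)). pose proof (Rabs_pos (y'-y)).
  assert (K1 * Rabs (x' - x) <= Rmax K1 K2 * Rabs (x'-x)) by (apply Rmult_le_compat_r; auto).
  assert (K2 * Rabs (y' - y) <= Rmax K1 K2 * Rabs (y'-y)) by (apply Rmult_le_compat_r; auto).
  lra.
Qed.

Lemma alg (p q A1 B1 A0 B0 M : R) : 0 <= p <= 1 -> 0 <= q <= 1 -> 0 <= A1 <= 1 -> 0 <= A0 <= 1 ->
  0 <= M -> Rabs (A1 - B1) <= M * Rabs (p - q) -> Rabs (A0 - B0) <= M * Rabs (p - q) -> p < q ->
  p * (A1 - 1) + (1 - p) * A0 - (q * (B1 - 1) + (1 - q) * B0) >= (2 + 2 * M) * (p - q).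
Proof.
  intros Hp Hq HA1 HA0 HM H1 H0 Hpq.
  rewrite (Rabs_left (p - q)) in H1, H0 by lra.
  replace (M * - (p - q)) with (M * (q - p)) in H1, H0 by ring.
  assert (-(A1 - B1) <= M * (q - p)) by (pose proof (Rle_abs (-(A1-B1))); rewrite Rabs_Ropp in H; lra).
  assert (-(A0 - B0) <= M * (q - p)) by (pose proof (Rle_abs (-(A0-B0))); rewrite Rabs_Ropp in H2; lra).
  remember (M * (q - p)) as w.
  assert (Hw : 0 <= w) by (subst w; nra).
  assert (q * (A1 - B1 + w) >= 0) by (apply Rle_ge, Rmult_le_pos; lra).
  assert ((1 - q) * (A0 - B0 + w) >= 0) by (apply Rle_ge, Rmult_le_pos; lra).
  assert ((p - q) * (A1 - 1) >= 0) by nra.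
  assert ((q - p) * A0 >= 0) by nra.
  assert (q * w <= w) by nra.
  assert ((1-q) * w <= w) by nra.
  nra.
Qed.

Lemma keyl (f0 f1 : R -> R -> R) (pol : policy) (p0 : R) :
  C1_on_sq f0 -> C1_on_sq f1 -> maps_sq_to_unit f0 -> maps_sq_to_unit f1 -> 0 <= p0 <= 1 ->
  exists r L, r > 0 /\ 0 <= L /\ forall p q, 0 <= p <= 1 -> 0 <= q <= 1 ->
    Rabs (p - p0) < r -> Rabs (q - p0) < r -> p < q ->
    dyn f0 f1 p (rates_A pol p q) - dyn f0 f1 q (rates_B pol p q) >= L * (p - q).
Proof.
  intros C0 C1 M0 M1 Hp0.
  assert (S0 : in_sq 0 p0) by (unfold in_sq; lra).
  destruct (loclip f0 0 p0 C0 S0) as [r0 [L0 [Hr0 [HL0 Hl0]]]].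
  destruct (loclip f1 0 p0 C1 S0) as [r1 [L1 [Hr1 [HL1 Hl1]]]].
  set (r := Rmin r0 r1 / 2). set (M := 2 * Rmax L0 L1).
  assert (Hr : 0 < r /\ r + r <= r0 /\ r + r <= r1).
  { unfold r. pose proof (Rmin_l r0 r1). pose proof (Rmin_r r0 r1).
    assert (0 < Rmin r0 r1) by (apply Rmin_glb_lt; lra). lra. }
  assert (HM : 0 <= M) by (unfold M; pose proof (Rmax_l L0 L1); lra).
  exists r, (2 + 2 * M). split; [lra|split; [lra|]].
  intros p q Hp Hq Hpr Hqr Hpq.
  assert (Hpq' : Rabs (q - p) < r0 /\ Rabs (q - p) < r1).
  { destruct (Rabs_def2 _ _ Hpr); destruct (Rabs_def2 _ _ Hqr).
    split; apply Rabs_def1; lra. }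
  assert (Z0 : Rabs (0 - 0) = 0) by (rewrite Rminus_0_r; apply Rabs_R0).
  assert (Hqp0 : Rabs (q - p - 0) = q - p) by (rewrite Rminus_0_r; apply Rabs_right; lra).
  assert (Hapq : Rabs (p - q) = q - p) by (rewrite Rabs_left by lra; ring).
  assert (HLm0 : L0 <= Rmax L0 L1) by apply Rmax_l.
  assert (HLm1 : L1 <= Rmax L0 L1) by apply Rmax_r.
  assert (sq : forall x y, 0 <= x <= 1 -> 0 <= y <= 1 -> in_sq x y) by (intros; unfold in_sq; lra).
  unfold rates_A, rates_B. destruct (Rle_dec q p) as [h|_]; [lra|].
  destruct pol; unfold adv_rates, disadv_rates, dyn; simpl.
  -
    apply alg; try lra.
    + apply M1, sq; lra.
    + apply M0, sq; lra.
    + pose proof (Hl1 0 q 0 p ltac:(apply sq; lra) ltac:(apply sq; lra)) as H.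
      rewrite Z0 in H.
      specialize (H ltac:(lra) ltac:(lra) ltac:(lra) ltac:(lra)). rewrite Hapq in *.
      unfold M. nra.
    + pose proof (Hl0 0 q 0 p ltac:(apply sq; lra) ltac:(apply sq; lra)) as H.
      rewrite Z0 in H.
      specialize (H ltac:(lra) ltac:(lra) ltac:(lra) ltac:(lra)). rewrite Hapq in *.
      unfold M. nra.
  -
    assert (0 <= f1 0 p <= 1) by (apply M1, sq; lra).
    assert (0 <= f0 0 p <= 1) by (apply M0, sq; lra).
    nra.
  -
    apply alg; try lra.
    + apply M1, sq; lra.
    + apply M0, sq; lra.
    + pose proof (Hl1 0 q (q - p) p ltac:(apply sq; lra) ltac:(apply sq; lra)) as H.
      rewrite Rminus_0_r, Rabs_R0 in H.
      specialize (H ltac:(lra) ltac:(rewrite Rminus_0_r; lra) ltac:(lra) ltac:(lra)).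
      rewrite Hqp0, Hapq in *. unfold M. nra.
    + pose proof (Hl0 0 q (q - p) p ltac:(apply sq; lra) ltac:(apply sq; lra)) as H.
      rewrite Rminus_0_r, Rabs_R0 in H.
      specialize (H ltac:(lra) ltac:(rewrite Rminus_0_r; lra) ltac:(lra) ltac:(lra)).
      rewrite Hqp0, Hapq in *. unfold M. nra.
Qed.

Lemma cont_eps (f : R -> R) (x : R) : continuity_pt f x -> forall eps, eps > 0 ->
  exists delta, delta > 0 /\ forall y, Rabs (y - x) < delta -> Rabs (f y - f x) < eps.
Proof.
  intros Hc eps Heps. destruct (Hc eps Heps) as [al [Hal H]].
  exists al; split; auto. intros y Hy.
  destruct (Req_dec y x) as [e|ne].
  { subst. replace (f x - f x) with 0 by ring. rewrite Rabs_R0; lra. }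
  apply (H y). split. { split; [exact I| auto]. } exact Hy.
Qed.

Lemma der_cont (f : R -> R) (x l : R) : derivable_pt_lim f x l -> continuity_pt f x.
Proof. intros H. apply derivable_continuous_pt. exists l. exact H. Qed.

Theorem mainTheorem7 (f0 f1 : R -> R -> R) (pol : policy) (pA pB : R -> R) :
  C1_on_sq f0 -> C1_on_sq f1 ->
  maps_sq_to_unit f0 -> maps_sq_to_unit f1 ->
  (forall t, 0 <= t -> 0 <= pA t <= 1 /\ 0 <= pB t <= 1) ->
  right_cont_0 pA -> right_cont_0 pB ->
  (forall t, 0 < t ->
     derivable_pt_lim pA t (dyn f0 f1 (pA t) (rates_A pol (pA t) (pB t)))) ->
  (forall t, 0 < t ->
     derivable_pt_lim pB t (dyn f0 f1 (pB t) (rates_B pol (pA t) (pB t)))) ->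
  pB 0 <= pA 0 ->
  forall t, 0 <= t -> pB t <= pA t.
Proof.
  intros C0 C1 M0 M1 Hrng RA RB DA DB H0 t Ht.
  destruct (Rle_dec (pB t) (pA t)) as [ok|Hneg]; [exact ok|exfalso].
  apply Rnot_le_lt in Hneg.
  assert (Ht0 : 0 < t) by (destruct Ht as [h|h]; [exact h| subst; lra]).
  assert (rc : forall f, right_cont_0 f -> (forall s, 0 < s -> continuity_pt f s) ->
     forall s, 0 <= s -> forall eps, eps > 0 -> exists delta, delta > 0 /\
       forall s', s <= s' < s + delta -> Rabs (f s' - f s) < eps).
  { intros f R0 Cf s Hs eps Heps. destruct Hs as [Hs|Hs].
    - destruct (cont_eps f s (Cf s Hs) eps Heps) as [dl [Hdl H]].
      exists dl; split; auto. intros s' Hs'. apply H. apply Rabs_def1; lra.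
    - subst s. destruct (R0 eps Heps) as [dl [Hdl H]]. exists dl; split; auto.
      intros s' Hs'. apply H. lra. }
  assert (CA : forall s, 0 < s -> continuity_pt pA s) by (intros s Hs; exact (der_cont _ _ _ (DA s Hs))).
  assert (CB : forall s, 0 < s -> continuity_pt pB s) by (intros s Hs; exact (der_cont _ _ _ (DB s Hs))).
  pose proof (rc pA RA CA) as rcA. pose proof (rc pB RB CB) as rcB. clear rc.
  set (E := fun s => 0 <= s <= t /\ pB s <= pA s).
  destruct (completeness E) as [u [Hub Hlub]].
  { exists t. intros s [Hs _]. lra. }
  { exists 0. split; [lra|exact H0]. }
  assert (Hu0 : 0 <= u) by (apply Hub; split; [lra|exact H0]).
  assert (Hut : u <= t) by (apply Hlub; intros s [Hs _]; lra).
  assert (CLa : pB u <= pA u).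
  { destruct (Rle_dec (pB u) (pA u)) as [h|h]; [exact h|exfalso].
    apply Rnot_le_lt in h.
    destruct Hu0 as [Hu0|Hu0]; [|subst u; lra].
    set (eps := (pB u - pA u) / 2).
    destruct (cont_eps pA u (CA u Hu0) eps ltac:(unfold eps; lra)) as [da [Hda Ha]].
    destruct (cont_eps pB u (CB u Hu0) eps ltac:(unfold eps; lra)) as [db [Hdb Hb]].
    set (dl := Rmin da db).
    assert (Hdl : 0 < dl /\ dl <= da /\ dl <= db)
      by (unfold dl; split; [apply Rmin_glb_lt; lra| split; [apply Rmin_l|apply Rmin_r]]).
    assert (Hub' : is_upper_bound E (u - dl / 2)).
    { intros s Es. pose proof (Hub s Es) as Hsu.
      destruct (Rle_dec s (u - dl/2)) as [hh|hh]; [exact hh|exfalso].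
      destruct Es as [_ Es].
      assert (Rabs (s - u) < da) by (apply Rabs_def1; lra).
      assert (Rabs (s - u) < db) by (apply Rabs_def1; lra).
      specialize (Ha s H). specialize (Hb s H1).
      destruct (Rabs_def2 _ _ Ha). destruct (Rabs_def2 _ _ Hb). unfold eps in *. lra. }
    specialize (Hlub _ Hub'). lra. }
  assert (Hut' : u < t) by (destruct Hut as [h|h]; [exact h| subst; lra]).
  assert (Neg : forall s, u < s <= t -> pA s < pB s).
  { intros s Hs. destruct (Rle_dec (pB s) (pA s)) as [h|h].
    - assert (E s) by (split; [lra|exact h]). specialize (Hub s H). lra.
    - lra. }
  assert (CLb : pA u <= pB u).
  { destruct (Rle_dec (pA u) (pB u)) as [h|h]; [exact h|exfalso].
    apply Rnot_le_lt in h. set (eps := (pA u - pB u) / 2).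
    destruct (rcA u Hu0 eps ltac:(unfold eps; lra)) as [da [Hda Ha]].
    destruct (rcB u Hu0 eps ltac:(unfold eps; lra)) as [db [Hdb Hb]].
    set (s := u + Rmin (Rmin da db) (t - u) / 2).
    assert (Hs : u < s /\ s < u + da /\ s < u + db /\ s <= t).
    { unfold s. pose proof (Rmin_l (Rmin da db) (t-u)). pose proof (Rmin_r (Rmin da db) (t-u)).
      pose proof (Rmin_l da db). pose proof (Rmin_r da db).
      assert (0 < Rmin (Rmin da db) (t - u)) by (repeat apply Rmin_glb_lt; lra). lra. }
    specialize (Ha s ltac:(lra)). specialize (Hb s ltac:(lra)).
    specialize (Neg s ltac:(lra)).
    destruct (Rabs_def2 _ _ Ha). destruct (Rabs_def2 _ _ Hb). unfold eps in *. lra. }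
  set (p0 := pA u).
  assert (Hp0 : 0 <= p0 <= 1) by (apply Hrng; lra).
  destruct (keyl f0 f1 pol p0 C0 C1 M0 M1 Hp0) as [r [L [Hr [HL Key]]]].
  destruct (rcA u Hu0 r Hr) as [da [Hda Ha]].
  destruct (rcB u Hu0 r Hr) as [db [Hdb Hb]].
  set (t3 := Rmin t (u + Rmin da db / 2)).
  assert (Ht3 : u < t3 /\ t3 <= t /\ t3 < u + da /\ t3 < u + db).
  { unfold t3. pose proof (Rmin_l t (u + Rmin da db / 2)). pose proof (Rmin_r t (u + Rmin da db / 2)).
    pose proof (Rmin_l da db). pose proof (Rmin_r da db).
    assert (0 < Rmin da db) by (apply Rmin_glb_lt; lra).
    assert (u < t3).
    { unfold t3. apply Rmin_glb_lt; lra. }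
    unfold t3 in *. lra. }
  set (dA := fun s => dyn f0 f1 (pA s) (rates_A pol (pA s) (pB s))).
  set (dB := fun s => dyn f0 f1 (pB s) (rates_B pol (pA s) (pB s))).
  assert (Dif : forall s, u < s <= t3 -> dA s - dB s >= L * (pA s - pB s)).
  { intros s Hs. unfold dA, dB. apply Key.
    - apply Hrng; lra.
    - apply Hrng; lra.
    - apply Ha; lra.
    - fold p0 in CLa, CLb. replace p0 with (pB u) by lra. apply Hb; lra.
    - apply Neg; lra. }
  set (e := fun s => (pA s - pB s) * exp (- L * s)).
  set (e' := fun s => (dA s - dB s) * exp (- L * s) + (pA s - pB s) * (exp (- L * s) * (- L * 1))).
  assert (De : forall s, 0 < s -> derivable_pt_lim e s (e' s)).
  { intros s Hs. unfold e, e'.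
    change (derivable_pt_lim ((pA - pB) * comp exp (mult_real_fct (- L) id))%F s
      ((dA s - dB s) * (comp exp (mult_real_fct (- L) id)) s + (pA - pB)%F s * (exp (mult_real_fct (-L) id s) * (- L * 1)))).
    apply derivable_pt_lim_mult.
    - apply derivable_pt_lim_minus; [apply DA|apply DB]; exact Hs.
    - apply derivable_pt_lim_comp.
      + apply derivable_pt_lim_scal, derivable_pt_lim_id.
      + apply derivable_pt_lim_exp. }
  assert (Ee : forall s, 0 <= s -> 0 < exp (- L * s) <= 1).
  { intros s Hs. split; [apply exp_pos|]. rewrite <- exp_0.
    destruct (Req_dec (- L * s) 0) as [z|z]; [rewrite z; lra|].
    left; apply exp_increasing. nra. }
  assert (Et3 : e t3 < 0).
  { unfold e. pose proof (Ee t3 ltac:(lra)). specialize (Neg t3 ltac:(lra)). nra. }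
  set (eps := - e t3 / 2).
  destruct (rcA u Hu0 eps ltac:(unfold eps; lra)) as [da' [Hda' Ha']].
  destruct (rcB u Hu0 eps ltac:(unfold eps; lra)) as [db' [Hdb' Hb']].
  set (a := u + Rmin (Rmin da' db') (t3 - u) / 2).
  assert (Hs : u < a /\ a < u + da' /\ a < u + db' /\ a < t3).
  { unfold a. pose proof (Rmin_l (Rmin da' db') (t3-u)). pose proof (Rmin_r (Rmin da' db') (t3-u)).
    pose proof (Rmin_l da' db'). pose proof (Rmin_r da' db').
    assert (0 < Rmin (Rmin da' db') (t3 - u)) by (repeat apply Rmin_glb_lt; lra). lra. }
  specialize (Ha' a ltac:(lra)). specialize (Hb' a ltac:(lra)).
  destruct (Rabs_def2 _ _ Ha'). destruct (Rabs_def2 _ _ Hb').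
  assert (Ea : e a > e t3).
  { unfold e at 1. pose proof (Ee a ltac:(lra)).
    assert (Hd : pA a - pB a > e t3) by (unfold eps in *; lra).
    destruct (Rle_dec 0 (pA a - pB a)); nra. }
  destruct (MVT_cor2 e e' a t3 ltac:(lra)) as [z [Hz1 Hz2]].
  { intros c Hc. apply De. lra. }
  assert (e' z >= 0).
  { unfold e'. pose proof (Ee z ltac:(lra)). pose proof (Dif z ltac:(lra)).
    assert ((dA z - dB z - L * (pA z - pB z)) * exp (- L * z) >= 0) by nra. nra. }
  assert (e' z * (t3 - a) >= 0) by nra.
  lra.
Qed.
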